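(* Let $[m]=X_1\cup\dots\cup X_k$ with the $X_i$ pairwise disjoint sets of size $n$, let $v_i$ be the smallest element of $X_i$, and let $k\ge\ell\ge\ell'\ge t\ge1$. Suppose that $\mathcal{F}\subseteq\mathcal{H}(n,k,\ell)$ and $\mathcal{G}\subseteq\mathcal{H}(n,k,\ell')$ are shifted and cross $t$-intersecting. Then $\mathcal{A}(\mathcal{F})\subseteq\{A\subseteq[k]:|A|\le\ell\}$ and $\mathcal{A}(\mathcal{G})\subseteq\{A\subseteq[k]:|A|\le\ell'\}$ are cross $t$-intersecting.
   Context: Here $m=kn$ with the natural order on $[m]$. $\mathcal{H}(n,k,\ell)=\{H\subseteq[m]:|H|=\ell,\ |H\cap X_i|\le1\ \forall i\in[k]\}$. For a family $\mathcal{F}$ of subsets and $i<j$, the shifting operator is $s_{i,j}(\mathcal{F})=\{s_{i,j}(F):F\in\mathcal{F}\}$ where $s_{i,j}(F)=(F\setminus\{j\})\cup\{i\}$ if $j\in F$, $i\notin F$ and $(F\setminus\{j\})\cup\{i\}\notin\mathcal{F}$, and $s_{i,j}(F)=F$ otherwise. A family $\mathcal{F}\subseteq\mathcal{H}(n,k,\ell)$ is shifted if $s_{i,j}(\mathcal{F})=\mathcal{F}$ for all $i<j$ lying in the same $X_a$ for some $a\in[k]$. For $H\in\mathcal{H}(n,k,\ell)$, $A(H)=\{i\in[k]: H\cap X_i=\{v_i\}\}$, and $\mathcal{A}(\mathcal{F})=\{A(F):F\in\mathcal{F}\}$. Families $\mathcal{F},\mathcal{G}$ are cross $t$-intersecting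 if $|F\cap G|\ge t$ for all $F\in\mathcal{F},G\in\mathcal{G}$. *)

(* Defs.v *)
From mathcomp Require Import all_boot all_order.
Set Implicit Arguments. Unset Strict Implicit. Unset Printing Implicit Defensive.

Definition shift_set (T : finType) (i j : T) (FF : {set {set T}}) (S : {set T})
  : {set T} :=
  if (j \in S) && (i \notin S) && ((i |: (S :\ j)) \notin FF)
  then i |: (S :\ j) else S.

Definition shift_fam (T : finType) (i j : T) (FF : {set {set T}}) : {set {set T}} :=
  [set shift_set i j FF S | S in FF].

Definition Hfam (m k l : nat) (X : 'I_k -> {set 'I_m}) : {set {set 'I_m}} :=
  [set H : {set 'I_m} | (#|H| == l) && [forall a : 'I_k, #|H :&: X a| <= 1]].

Definition shifted (m k : nat) (X : 'I_k -> {set 'I_m}) (FF : {set {set 'I_m}}) :=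
  forall i j : 'I_m, (i < j)%N -> (exists a : 'I_k, (i \in X a) && (j \in X a)) ->
    shift_fam i j FF = FF.

Definition A_of (m k : nat) (X : 'I_k -> {set 'I_m}) (v : 'I_k -> 'I_m)
  (H : {set 'I_m}) : {set 'I_k} :=
  [set i : 'I_k | H :&: X i == [set v i]].

Definition A_fam (m k : nat) (X : 'I_k -> {set 'I_m}) (v : 'I_k -> 'I_m)
  (FF : {set {set 'I_m}}) : {set {set 'I_k}} :=
  [set A_of X v F | F in FF].

Definition cross_tint (T : finType) (t : nat) (FF GG : {set {set T}}) : Prop :=
  forall F G, F \in FF -> G \in GG -> (t <= #|F :&: G|)%N.

(* Main.v *)
Require Import Defs.
From mathcomp Require Import all_boot all_order.
Set Implicit Arguments. Unset Strict Implicit.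

Lemma shift_mem m k (X : 'I_k -> {set 'I_m}) (FF : {set {set 'I_m}}) (F : {set 'I_m}) (i j : 'I_m) a :
  shifted X FF -> F \in FF -> (i < j)%N -> i \in X a -> j \in X a ->
  j \in F -> i \notin F -> i |: (F :\ j) \in FF.
Proof.
move=> HS HF lt ia ja jF iF; case Hn: (i |: (F :\ j) \in FF) => //.
have E := HS i j lt (ex_intro _ a (introT andP (conj ia ja))).
rewrite -Hn -E; apply/imsetP; exists F => //.
by rewrite /shift_set jF iF Hn.
Qed.

Lemma vinj m k (X : 'I_k -> {set 'I_m}) (v : 'I_k -> 'I_m) :
  (forall a b : 'I_k, a != b -> [disjoint X a & X b]) ->
  (forall a, v a \in X a) -> injective v.
Proof.
move=> HD Hv a b E; apply/eqP/negPn/negP => ne.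
by have := disjointFr (HD a b ne) (Hv a); rewrite E Hv.
Qed.

Lemma inX m k (X : 'I_k -> {set 'I_m}) x :
  \bigcup_(a < k) X a = [set: 'I_m] -> exists a, x \in X a.
Proof.
move=> C; have : x \in \bigcup_(a < k) X a by rewrite C inE.
by case/bigcupP => a _ xa; exists a.
Qed.

Lemma one_eq m (A : {set 'I_m}) x y : (#|A| <= 1)%N -> x \in A -> y \in A -> x = y.
Proof. by move/card_le1_eqP => H xA yA; apply: H. Qed.

Lemma main m k t (X : 'I_k -> {set 'I_m}) (v : 'I_k -> 'I_m)
  (HD : forall a b : 'I_k, a != b -> [disjoint X a & X b])
  (HC : \bigcup_(a < k) X a = [set: 'I_m])
  (Hv : forall a : 'I_k, v a \in X a /\ (forall x, x \in X a -> (v a <= x)%N))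
  (FF : {set {set 'I_m}}) (G : {set 'I_m})
  (HF1 : forall F, F \in FF -> forall a, (#|F :&: X a| <= 1)%N)
  (HG1 : forall a, (#|G :&: X a| <= 1)%N)
  (HFs : shifted X FF)
  (HFG : forall F, F \in FF -> (t <= #|F :&: G|)%N) :
  forall N F, (#|F :&: G :\: [set v a | a : 'I_k]| < N)%N -> F \in FF ->
    (t <= #|A_of X v F :&: A_of X v G|)%N.
Proof.
have vX a : v a \in X a by case: (Hv a).
have Xeq a F : F \in FF -> v a \in F -> F :&: X a = [set v a].
  move=> FF1 vF; apply/eqP; rewrite eq_sym eqEcard sub1set inE vF vX /= cards1.
  exact: HF1.
elim=> [//|N IH] F.
case: (boolP ((F :&: G :\: [set v a | a : 'I_k]) == set0)) => [/eqP E0 _ FF1|].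
  apply: (leq_trans (HFG F FF1)).
  apply: (leq_trans _ (leq_imset_card v _)); apply: subset_leq_card.
  apply/subsetP => y yFG.
  have : y \notin F :&: G :\: [set v a | a : 'I_k] by rewrite E0 inE.
  rewrite inE yFG andbT negbK => /imsetP [a _ Ey]; subst y.
  move: yFG; rewrite inE => /andP [yF yG].
  apply/imsetP; exists a => //; rewrite !inE; apply/andP; split; apply/eqP.
    by apply: (Xeq a F FF1 yF).
  by apply/eqP; rewrite eq_sym eqEcard sub1set inE yG vX /= cards1.
case/set0Pn => x xS lt FF1.
move: (xS); rewrite !inE => /andP [xV /andP [xF xG]].
have [a xa] := inX x HC.
have vax : v a != x by apply: contraNneq xV => <-; apply/imsetP; exists a.
have lt' : (v a < x)%N by rewrite ltn_neqAle; case: (Hv a) => _ ->; rewrite // andbT.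
have vF : v a \notin F.
  apply/negP => vF; move/negP: vax; apply.
  by apply/eqP; apply: (one_eq (HF1 F FF1 a)); rewrite inE ?vF ?xF ?vX ?xa.
have FF2 := shift_mem HFs FF1 lt' (vX a) xa xF vF.
apply: (leq_trans (IH _ _ FF2)).
- rewrite ltnS in lt; apply: leq_trans lt.
  rewrite (cardsD1 x (F :&: G :\: _)) xS add1n ltnS.
  apply: subset_leq_card; apply/subsetP => y.
  rewrite !inE => /andP [yV /andP [/orP [/eqP yv | /andP [yx yF]] yG]].
    by move: yV; rewrite yv; case/negP; apply/imsetP; exists a.
  by rewrite yx yV yF yG.
apply: subset_leq_card; apply/subsetP => j; rewrite !inE => /andP [jF jG].
rewrite jG andbT.
have ja : j != a.
  apply: contraNneq xV => E; subst j.
  have : x \in G :&: X a by rewrite inE xG xa.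
  by rewrite (eqP jG) inE => /eqP ->; apply/imsetP; exists a.
have D := HD j a ja.
rewrite -(eqP jF); apply/eqP/setP => y; rewrite !inE.
case yj: (y \in X j); rewrite ?andbF // !andbT.
have -> : (y == v a) = false.
  by apply/negbTE; apply: contraTneq yj => ->; rewrite (disjointFl D (vX a)).
have -> : (y == x) = false.
  by apply/negbTE; apply: contraTneq yj => ->; rewrite (disjointFl D xa).
by [].
Qed.

Lemma cardA m k (X : 'I_k -> {set 'I_m}) (v : 'I_k -> 'I_m) (F : {set 'I_m}) :
  injective v -> (#|A_of X v F| <= #|F|)%N.
Proof.
move=> vi; rewrite -(card_imset _ vi); apply: subset_leq_card.
apply/subsetP => y /imsetP [a]; rewrite /A_of inE => /eqP E ->.
have : v a \in F :&: X a by rewrite E set11.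
by rewrite inE => /andP [].
Qed.

Theorem lemma3p2 (n k l l' t : nat) (X : 'I_k -> {set 'I_(k * n)})
    (v : 'I_k -> 'I_(k * n))
    (HXdisj : forall a b : 'I_k, a != b -> [disjoint X a & X b])
    (HXsize : forall a : 'I_k, #|X a| = n)
    (HXcover : \bigcup_(a < k) X a = [set: 'I_(k * n)])
    (Hv : forall a : 'I_k, v a \in X a /\ (forall x, x \in X a -> (v a <= x)%N))
    (Hkl : (l <= k)%N) (Hll : (l' <= l)%N) (Hlt : (t <= l')%N) (Ht : (1 <= t)%N)
    (F G : {set {set 'I_(k * n)}})
    (HF : F \subset Hfam l X) (HG : G \subset Hfam l' X)
    (HFs : shifted X F) (HGs : shifted X G)
    (HFG : cross_tint t F G) :
  A_fam X v F \subset [set A : {set 'I_k} | (#|A| <= l)%N] /\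
  A_fam X v G \subset [set A : {set 'I_k} | (#|A| <= l')%N] /\
  cross_tint t (A_fam X v F) (A_fam X v G).
Proof.
have vi : injective v by apply: (vinj HXdisj) => a; case: (Hv a).
have Hmem (FF : {set {set 'I_(k * n)}}) L H : FF \subset Hfam L X -> H \in FF ->
    #|H| = L /\ forall a, (#|H :&: X a| <= 1)%N.
  move=> /subsetP S /S; rewrite inE => /andP [/eqP -> /forallP P]; by split.
split; [|split].
- apply/subsetP => A /imsetP [H HH ->]; rewrite inE.
  by case: (Hmem _ _ _ HF HH) => <- _; apply: cardA.
- apply/subsetP => A /imsetP [H HH ->]; rewrite inE.
  by case: (Hmem _ _ _ HG HH) => <- _; apply: cardA.
move=> A B /imsetP [F1 HF1 ->] /imsetP [G1 HG1 ->].
apply: (@main _ _ t X v HXdisj HXcover Hv F G1 _ _ HFs _ _ F1 (leqnn _) HF1).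
- by move=> H HH; case: (Hmem _ _ _ HF HH).
- by case: (Hmem _ _ _ HG HG1).
- by move=> H HH; apply: HFG.
Qed.
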